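(* Let $\mathcal C$ be a class of finite simple graphs and let $f:\mathbb{N}\to\mathbb{N}$ be an unbounded non-decreasing function with $f(x)\le x$ for all $x$. If $\sup_{G\in\mathcal C} N_f(G,r)<\infty$ for every $r\in\mathbb{N}$, then $\mathcal C$ has bounded expansion.
   Context: For a finite simple graph $G$, a function $f:\mathbb{N}\to\mathbb{N}$ and a positive integer $p$, $N_f(G,p)$ denotes the minimum number of colours in a colouring of the edges of $G$ such that every cycle $\gamma$ of $G$ receives at least $\min(f(|\gamma|),p+1)$ distinct colours, where $|\gamma|$ is the length of $\gamma$. A simple graph $H$ is a shallow minor of $G$ at depth $r$ if there are pairwise vertex-disjoint subtrees $T_1,\dots,T_k$ of $G$, each having a root from which every vertex of the tree is at distance at most $r$ in the tree, such that $H$ is isomorphic to a subgraph of the graph with vertex set $\{T_1,\dots,T_k\}$ in which $T_i,T_j$ are adjacent iff some edge of $G$ joins a vertex of $T_i$ to a vertex of $T_j$. $\nabla_r(G)$ is the maximum of $\|H\|/|H|$ over all shallow minors $H$ of $G$ at depth $r$. A class $\mathcal C$ has bounded expansion if $\sup_{G\in\mathcal C}\nabla_r(G)<\infty$ for every integer $r\ge 0$. *)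

(* Defs.v *)
From mathcomp Require Import all_boot.
Set Implicit Arguments. Unset Strict Implicit. Unset Printing Implicit Defensive.

Record sgraph := SGraph {
  vert :> finType;
  adj : rel vert;
  adj_sym : symmetric adj;
  adj_irr : irreflexive adj }.

Definition nedges (G : sgraph) : nat :=
  #|[set p : G * G | adj p.1 p.2]| %/ 2.

Definition is_cycle (G : sgraph) (s : seq G) : Prop :=
  [/\ uniq s, 3 <= size s & cycle (@adj G) s].

Definition cycle_edges (G : sgraph) (s : seq G) : seq (G * G) :=
  zip s (rot 1 s).

Definition edge_colouring (G : sgraph) (k : nat) (c : G -> G -> nat) : Prop :=
  forall x y, adj x y -> c x y = c y x /\ c x y < k.

Definition ncolours (G : sgraph) (c : G -> G -> nat) (s : seq G) : nat :=
  size (undup [seq c e.1 e.2 | e <- cycle_edges s]).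

Definition good_colouring (G : sgraph) (f : nat -> nat) (p : nat)
    (c : G -> G -> nat) : Prop :=
  forall s : seq G, is_cycle s -> minn (f (size s)) p.+1 <= ncolours c s.

Definition Nf_le (G : sgraph) (f : nat -> nat) (p k : nat) : Prop :=
  exists c : G -> G -> nat, edge_colouring k c /\ good_colouring f p c.

(* The tree is encoded by a parent function par:
   its edges are {x, par x} for x <> root; par root = root and
   iterating par r times from any vertex of B reaches the root. *)
Definition shallow_tree (G : sgraph) (r : nat) (B : {set G}) : Prop :=
  exists (root : G) (par : G -> G),
    [/\ root \in B, par root = root &
        forall x, x \in B ->
          [/\ par x \in B, x != root -> adj x (par x) & iter r par x = root]].

Definition shallow_minor (H G : sgraph) (r : nat) : Prop :=
  exists B : H -> {set G},
    [/\ forall w, shallow_tree r (B w),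
        forall w w', w != w' -> [disjoint B w & B w'] &
        forall w w', adj w w' ->
          exists x y, [/\ x \in B w, y \in B w' & adj x y]].

Definition nabla_le (G : sgraph) (r M : nat) : Prop :=
  forall H : sgraph, shallow_minor H G r -> nedges H <= M * #|H|.

Definition bounded_expansion (C : sgraph -> Prop) : Prop :=
  forall r : nat, exists M : nat, forall G, C G -> nabla_le G r M.

(* Main.v *)
Require Import Defs.
From mathcomp Require Import all_boot zify.
From Stdlib Require Import ClassicalEpsilon.
Set Implicit Arguments. Unset Strict Implicit. Unset Printing Implicit Defensive.

Section EG.
Variables (T : finType) (e : rel T).
Hypothesis esym : symmetric e.
Hypothesis eirr : irreflexive e.

Lemma uniq_card_le (S : {set T}) (s : seq T) :
  uniq s -> {subset s <= S} -> size s <= #|S|.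
Proof.
move=> /card_uniqP <- sS; apply: subset_leq_card.
by apply/subsetP.
Qed.

Lemma maxpath (S : {set T}) : forall n x s, #|S| - size (x :: s) <= n ->
  x \in S -> {subset s <= S} -> uniq (x :: s) -> path e x s ->
  exists x' s', [/\ x' \in S, {subset s' <= S}, uniq (x' :: s'), path e x' s'
     & forall y, y \in S -> e x' y -> y \in s'].
Proof.
elim=> [|n IH] x s Hn xS sS us ps;
  (case: (boolP [exists y in S, e x y && (y \notin x :: s)]) => [/exists_inP [y yS /andP [exy yn]]|Hne];
  last first).
- exists x, s; split=> // y yS exy.
  move/exists_inP: Hne => Hne.
  have: y \in x :: s.
    case: (boolP (y \in x :: s)) => // yn; case: Hne; exists y => //.
    by rewrite exy.
  rewrite inE => /orP [/eqP yx|//]; by rewrite yx eirr in exy.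
- have : size (y :: x :: s) <= #|S|.
    apply: uniq_card_le; first by rewrite /= yn.
    by move=> z; rewrite inE => /orP [/eqP->|]; [|rewrite inE => /orP [/eqP->|/sS]].
  simpl in *; lia.
- exists x, s; split=> // y yS exy.
  move/exists_inP: Hne => Hne.
  have: y \in x :: s.
    case: (boolP (y \in x :: s)) => // yn; case: Hne; exists y => //.
    by rewrite exy.
  rewrite inE => /orP [/eqP yx|//]; by rewrite yx eirr in exy.
- apply: (IH y (x :: s)) => //.
  + simpl in *; lia.
  + by move=> z; rewrite inE => /orP [/eqP->|/sS].
  + by rewrite /= yn.
  + by rewrite /= esym exy.
Qed.

Definition Epairs (S : {set T}) :=
  [set q : T * T | [&& e q.1 q.2, q.1 \in S & q.2 \in S]].

Lemma cycle_from_path x s k :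
  0 < k -> uniq (x :: s) -> path e x s ->
  k < #|[set u | e x u & u \in s]| ->
  exists c, [/\ uniq c, cycle e c, 3 <= size c & k < size c].
Proof.
move=> k0 us ps Hk.
case: (boolP [exists i : 'I_(size s), (k <= i) && e x (nth x s i)]);
  last first.
  move/existsPn => Hn.
  have : #|[set u | e x u & u \in s]| <= k.
    apply: (@leq_trans (size [seq nth x s i | i <- iota 0 k])); last by rewrite size_map size_iota.
    apply: (leq_trans _ (card_size _)); apply: subset_leq_card; apply/subsetP => u.
    rewrite inE => /andP [exu us'].
    have ilt : index u s < size s by rewrite index_mem.
    have := Hn (Ordinal ilt); rewrite /= nth_index // exu andbT -ltnNge => ik.
    by apply/mapP; exists (index u s); rewrite ?nth_index // mem_iota.
  by rewrite leqNgt Hk.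
move/existsP => [i /andP [ki exi]].
exists (x :: take i.+1 s); split.
- move: us; rewrite /= => /andP [xs us]; rewrite take_uniq // andbT.
  by apply: contra xs; apply: mem_take.
- rewrite /= rcons_path take_path //=.
  have -> : last x (take i.+1 s) = nth x s i.
    by rewrite (last_nth x) (size_takel (ltn_ord i)) /= nth_take.
  by rewrite esym.
- by rewrite /= (size_takel (ltn_ord i)); lia.
- by rewrite /= (size_takel (ltn_ord i)); lia.
Qed.

Lemma EG k : 0 < k ->
  (forall s, uniq s -> cycle e s -> 3 <= size s -> size s <= k) ->
  forall S : {set T}, #|Epairs S| <= 2 * k * #|S|.
Proof.
move=> k0 Hc S; elim: {S}_.+1 {-2}S (ltnSn #|S|) => // m IH S HS.
case: (boolP [exists v in S, #|[set u in S | e v u]| <= k]).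
  move/exists_inP => [v vS Hv].
  set N := [set u in S | e v u].
  have sub : Epairs S \subset Epairs (S :\ v) :|: ((fun u => (v, u)) @: N)
                      :|: ((fun u => (u, v)) @: N).
    apply/subsetP => -[a b]; rewrite !inE /= => /and3P [eab aS bS].
    case: (eqVneq a v) => [av|av].
      apply/orP; left; apply/orP; right; apply/imsetP; exists b;
        by rewrite ?av // /N inE bS -av eab.
    case: (eqVneq b v) => [bv|bv].
      apply/orP; right; apply/imsetP; exists a;
        by rewrite ?bv // /N inE aS -bv esym eab.
    idtac.
    apply/orP; left; apply/orP; left; rewrite ?inE /= ?eab ?av ?bv ?aS ?bS //.
  have IHv := IH (S :\ v).
  have cS := cardsD1 v S; rewrite vS in cS.
  have : #|S :\ v| < m by move: HS; rewrite cS; lia.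
  move/IHv => H1.
  apply: (leq_trans (subset_leq_card sub)).
  have h1 := (leq_card_setU (Epairs (S :\ v) :|: ((fun u => (v, u)) @: N)) ((fun u => (u, v)) @: N)).1.
  have h2 := (leq_card_setU (Epairs (S :\ v)) ((fun u => (v, u)) @: N)).1.
  have h3 := leq_imset_card (fun u => (v, u)) N.
  have h4 := leq_imset_card (fun u => (u, v)) N.
  move: h1 h2 => /= h1 h2.
  have hN : #|N| <= k := Hv. rewrite cS /=. apply: (leq_trans h1). apply: (leq_trans (leq_add h2 (leqnn _))). move: H1 h3 h4 hN. move: #|Epairs (S :\ v)| #|[set (v, u) | u in N]| #|[set (u, v) | u in N]| #|N| #|S :\ v| => a b c d x. nia.
move/exists_inP => Hall.
case: (set_0Vmem S) => [->|[v vS]].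
  rewrite cards0 muln0 leqn0 cards_eq0; apply/eqP/setP => q.
  by rewrite !inE andbC /= ?andbF ?in_set0 ?andbF.
have [x [s [xS sS us ps Hmax]]] := @maxpath S #|S| v [::] (leq_subr _ _) vS
   (fun z (h : z \in [::]) => ltac:(by rewrite in_nil in h)) is_true_true is_true_true.
have Hx : k < #|[set u | e x u & u \in s]|.
  rewrite ltnNge; apply/negP => Hle; apply: Hall; exists x => //.
  apply: (leq_trans _ Hle); apply: subset_leq_card; apply/subsetP => u.
  by rewrite !inE => /andP [uS exu]; rewrite exu (Hmax u uS exu).
have [c [uc cc c3 ck]] := cycle_from_path k0 us ps Hx.
by have := Hc c uc cc c3; rewrite leqNgt ck.
Qed.

End EG.

Lemma path_zip (T : Type) (e : rel T) x p :
  path e x p -> all (fun q => e q.1 q.2) (zip (belast x p) p).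
Proof. by elim: p x => //= y p IH x /andP [-> /IH]. Qed.

Section Lift.
Variables (G H : sgraph) (r M : nat) (c : G -> G -> nat).
Hypothesis hc : edge_colouring M c.
Variable B : H -> {set G}.
Hypothesis Bdisj : forall w w', w != w' -> [disjoint B w & B w'].
Variables (rt : H -> G) (pr : H -> G -> G).
Hypothesis trees : forall w, [/\ rt w \in B w, pr w (rt w) = rt w &
  forall x, x \in B w -> [/\ pr w x \in B w, x != rt w -> adj x (pr w x) &
                              iter r (pr w) x = rt w]].
Variable t : {set 'I_M.+1}.

Definition adjQ (a b : G) := adj a b && (inord (c a b) \in t).
Definition eQ (a b : G) := (a == b) || adjQ a b.

Lemma adjQ_sym : symmetric adjQ.
Proof.
move=> a b; rewrite /adjQ adj_sym; case h: (adj b a) => //=.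
by have [-> _] := hc h.
Qed.

Lemma eQ_sym : symmetric eQ.
Proof. by move=> a b; rewrite /eQ adjQ_sym eq_sym. Qed.

Fixpoint upw (p : G -> G) n z := if n is n'.+1 then p z :: upw p n' (p z) else [::].
Fixpoint upc (p : G -> G) n z :=
  if n is n'.+1 then c z (p z) :: upc p n' (p z) else [::].

Definition okv w z := (z \in B w) && all (fun k => inord k \in t) (upc (pr w) r z).

Lemma up_last (p : G -> G) n z : last z (upw p n z) = iter n p z.
Proof. by elim: n z => //= n IH z; rewrite IH -iterSr. Qed.

Lemma up_path w n z : z \in B w -> all (fun k => inord k \in t) (upc (pr w) n z) ->
  path eQ z (upw (pr w) n z) && all (fun u => u \in B w) (upw (pr w) n z).
Proof.
have [rtB prt Hx] := trees w.
elim: n z => //= n IH z zB /andP [hk ha].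
have [pB padj _] := Hx z zB.
have /andP [-> ->] := IH _ pB ha.
rewrite pB !andbT /eQ.
case: (eqVneq z (rt w)) => [->|zr]; first by rewrite prt eqxx.
by rewrite /adjQ padj // hk orbT.
Qed.

Lemma eQ_adjQ : forall s y, path eQ y s -> uniq (y :: s) -> path adjQ y s.
Proof.
elim=> //= z s IH y /andP [eyz ps] /andP [yn us].
rewrite IH // andbT.
move: eyz; rewrite /eQ; case: eqP => //= yz.
by rewrite yz inE eqxx in yn.
Qed.

Lemma seg w y x : okv w y -> okv w x ->
  exists s, [/\ path adjQ y s, last y s = x, uniq (y :: s) & {subset s <= B w}].
Proof.
have [rtB prt Hx] := trees w.
move=> /andP [yB ya] /andP [xB xa].
have /andP [p1 a1] := up_path yB ya.
have /andP [p2 a2] := up_path xB xa.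
set q1 := upw (pr w) r y; set q2 := upw (pr w) r x.
have l1 : last y q1 = rt w by rewrite /q1 up_last; have [_ _ ->] := Hx y yB.
have l2 : last x q2 = rt w by rewrite /q2 up_last; have [_ _ ->] := Hx x xB.
have pw : path eQ y (q1 ++ rev (belast x q2)).
  rewrite cat_path p1 l1 -l2 rev_path /=.
  by rewrite (@eq_path _ _ eQ) // => a b; rewrite eQ_sym.
have lw : last y (q1 ++ rev (belast x q2)) = x.
  rewrite last_cat l1 -l2; case: (q2) => //= z q.
  by rewrite rev_cons last_rcons.
move: lw; case: (shortenP pw) => p' pp' up' sub' lp'.
exists p'; split => //.
- exact: eQ_adjQ.
- move=> u /sub'; rewrite mem_cat => /orP [/(allP a1) //|].
  rewrite mem_rev => /mem_belast; rewrite inE => /orP [/eqP -> //|/(allP a2) //].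
Qed.

Definition link w w' := exists a b, [/\ okv w a, okv w' b & adjQ a b].

Lemma lift (R : rel H) (HR : forall w w', R w w' -> link w w') :
  forall ws w0 b a, path R w0 ws -> uniq (w0 :: ws) -> okv w0 b ->
  okv (last w0 ws) a ->
  exists g, [/\ path adjQ b g, last b g = a, uniq (b :: g), size ws <= size g
    & forall z, z \in b :: g -> exists2 w, w \in w0 :: ws & z \in B w].
Proof.
elim=> [|w1 ws IH] w0 b a /=.
  move=> _ _ ob oa; have [s [ps ls us ss]] := seg ob oa.
  exists s; split => // z; rewrite inE => /orP [/eqP ->|/ss]; exists w0;
    rewrite ?inE //.
  by case/andP: ob.
move=> /andP [Rw ps] /andP [w0n uws] ob oa.
have [a0 [b1 [oa0 ob1 q01]]] := HR _ _ Rw.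
have [s [ps0 ls us ss]] := seg ob oa0.
have [g [pg lg ug sg mg]] := IH w1 b1 a ps uws ob1 oa.
exists (s ++ b1 :: g); split.
- by rewrite cat_path ps0 /= ls q01 pg.
- by rewrite last_cat /= lg.
- change (uniq ((b :: s) ++ b1 :: g)); rewrite cat_uniq us ug andbT.
  apply/hasPn => z /mg [w wi zw].
  apply/negP => zs.
  have zB0 : z \in B w0 by move: zs; rewrite inE => /orP [/eqP ->|/ss //]; case/andP: ob.
  have wn : w0 != w by apply: contra w0n => /eqP ->.
  by rewrite (disjointFr (Bdisj wn) zB0) in zw.
- by rewrite size_cat /=; lia.
- move=> z; rewrite -cat_cons mem_cat => /orP [zs|/mg [w wi zw]].
    exists w0; first by rewrite inE eqxx.
    by move: zs; rewrite inE => /orP [/eqP ->|/ss //]; case/andP: ob.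
  by exists w; rewrite // inE wi orbT.
Qed.

Lemma lift_cycle (R : rel H) (HR : forall w w', R w w' -> link w w') ws :
  uniq ws -> cycle R ws -> 3 <= size ws ->
  exists g, [/\ is_cycle g, size ws <= size g & cycle adjQ g].
Proof.
case: ws => // w0 rest uws; rewrite /= rcons_path => /andP [pr' Rl] s3.
have [a [b [oa ob qab]]] := HR _ _ Rl.
have [g [pg lg ug sg _]] := lift HR pr' uws ob oa.
have cg : cycle adjQ (b :: g) by rewrite /= rcons_path pg lg qab.
exists (b :: g); split => //=.
- split => //=; first by move: s3 => /=; lia.
  by apply: sub_cycle cg => x y /andP [].
Qed.

Lemma ncolours_le g : cycle adjQ g -> ncolours c g <= #|t|.
Proof.
case: g => [_|x s]; first by rewrite /ncolours /cycle_edges.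
move=> cg; rewrite /ncolours /cycle_edges rot1_cons.
have := path_zip cg; rewrite belast_rcons => hz.
set L := [seq c e.1 e.2 | e <- zip (x :: s) (rcons s x)].
have hL : forall k, k \in L -> (k < M) && (inord k \in t).
  move=> k /mapP [q qi ->]; have /andP [qa qt] := allP hz q qi.
  by have [_ ->] := hc qa; rewrite qt.
rewrite -(size_map (fun k => inord k : 'I_M.+1)) cardE.
apply: uniq_leq_size.
  rewrite map_inj_in_uniq ?undup_uniq // => k1 k2.
  rewrite !mem_undup => /hL /andP [k1M _] /hL /andP [k2M _] e12.
  have := congr1 val e12; rewrite /= !inordK; lia.
move=> z /mapP [k]; rewrite mem_undup => /hL /andP [_ kt] ->.
by rewrite mem_enum.
Qed.

End Lift.

Lemma choice_fun (A B' : Type) (P : A -> B' -> Prop) :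
  (forall a, exists b, P a b) -> exists g, forall a, P a (g a).
Proof.
move=> h; exists (fun a => proj1_sig (constructive_indefinite_description _ (h a))).
by move=> a; case: (constructive_indefinite_description _ (h a)).
Qed.

Lemma card_sumb (T : finType) (X : {set T}) : #|X| = \sum_q ((q \in X) : nat).
Proof. by rewrite -sum1_card big_mkcond; apply: eq_bigr => q _; case: (q \in X). Qed.

Lemma card_cover_le (T I : finType) (A : {set T}) (E : I -> {set T}) (ty : T -> I) :
  (forall q, q \in A -> q \in E (ty q)) -> #|A| <= \sum_(t : I) #|E t|.
Proof.
move=> hA; rewrite card_sumb.
rewrite (eq_bigr (fun t => \sum_q ((q \in E t) : nat))); last by move=> t _; exact: card_sumb.
rewrite exchange_big /=; apply: leq_sum => q _.
case qA: (q \in A) => //=.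
by rewrite (bigD1 (ty q)) //= hA.
Qed.

Lemma size_upc (G : sgraph) c (p : G -> G) n z : size (upc c p n z) = n.
Proof. by elim: n z => //= n IH z; rewrite IH. Qed.

Section Main.
Variables (G H : sgraph) (r M : nat) (c : G -> G -> nat).
Variable B : H -> {set G}.
Variable pr : H -> G -> G.

Definition wit (w w' : H) :=
  [pick q : G * G | [&& q.1 \in B w, q.2 \in B w' & adj q.1 q.2]].

Definition typ (w w' : H) : {set 'I_M.+1} :=
  if wit w w' is Some q then
    [set z in [seq inord k | k <- c q.1 q.2 :: upc c (pr w) r q.1 ++ upc c (pr w') r q.2]]
  else set0.

Definition adjt (t : {set 'I_M.+1}) : rel H :=
  fun w w' => adj w w' && ((typ w w' == t) || (typ w' w == t)).

Lemma typ_card w w' : #|typ w w'| <= r.*2.+1.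
Proof.
rewrite /typ; case: (wit w w') => [q|]; last by rewrite cards0.
rewrite cardsE; apply: (leq_trans (card_size _)).
by rewrite size_map /= size_cat !size_upc addnn.
Qed.

Hypothesis hc : edge_colouring M c.
Hypothesis He : forall w w', adj w w' -> exists x y, [/\ x \in B w, y \in B w' & adj x y].

Lemma typ_link w w' t : adj w w' -> typ w w' = t -> link r c B pr t w w'.
Proof.
move=> aww; rewrite /typ /wit; case: pickP => [[x y] /and3P [xB yB axy] /= <-|none].
  have inT : forall k, k \in c x y :: upc c (pr w) r x ++ upc c (pr w') r y ->
     inord k \in [set z in [seq inord k | k <- c x y :: upc c (pr w) r x ++ upc c (pr w') r y]].
    by move=> k kin; rewrite in_set; apply: map_f.
  exists x, y; split.
  - rewrite /okv xB /=; apply/allP => k kin; apply: inT.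
    by rewrite inE mem_cat kin orbT.
  - rewrite /okv yB /=; apply/allP => k kin; apply: inT.
    by rewrite inE mem_cat kin !orbT.
  - by rewrite /adjQ axy inT // inE eqxx.
have [x [y [xB yB axy]]] := He aww.
by have := none (x, y); rewrite /= xB yB axy.
Qed.

Lemma adjt_link t w w' : adjt t w w' -> link r c B pr t w w'.
Proof.
move=> /andP [aww /orP [/eqP h|/eqP h]]; first exact: typ_link.
have aw : adj w' w by rewrite adj_sym.
have [a [b [oa ob qab]]] := typ_link aw h.
by exists b, a; split => //; rewrite adjQ_sym.
Qed.

Lemma adjt_sym t : symmetric (adjt t).
Proof. by move=> w w'; rewrite /adjt adj_sym orbC. Qed.

Lemma adjt_irr t : irreflexive (adjt t).
Proof. by move=> w; rewrite /adjt adj_irr. Qed.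

End Main.

Theorem mainTheorem4 (C : sgraph -> Prop) (f : nat -> nat)
  (f_unbounded : forall m, exists x, m <= f x)
  (f_nondecr : forall x y, x <= y -> f x <= f y)
  (f_le : forall x, f x <= x)
  (hN : forall r : nat, 0 < r -> exists M : nat, forall G, C G -> Nf_le G f r M) :
  bounded_expansion C.
Proof.
move=> r.
have [M hM] := hN r.*2.+1 (ltn0Sn _).
have [L hL] := f_unbounded r.*2.+2.
exists (#|{set 'I_M.+1}| * (2 * L.+1)).
move=> G CG H [B [HT Hd He]].
have [c [hc hg]] := hM G CG.
have [g hg'] := @choice_fun H (G * (G -> G)) (fun w d => [/\ d.1 \in B w, d.2 d.1 = d.1 &
   forall x, x \in B w -> [/\ d.2 x \in B w, x != d.1 -> adj x (d.2 x) & iter r d.2 x = d.1]]) 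
   (fun w => match HT w with ex_intro root (ex_intro par h) => ex_intro _ (root, par) h end).
pose rt := fun w => (g w).1; pose pr := fun w => (g w).2.
have trees : forall w, [/\ rt w \in B w, pr w (rt w) = rt w &
  forall x, x \in B w -> [/\ pr w x \in B w, x != rt w -> adj x (pr w x) &
                              iter r (pr w) x = rt w]] := hg'.
have Hcyc : forall (t : {set 'I_M.+1}) s, uniq s -> cycle (adjt r c B pr t) s -> 3 <= size s -> size s <= L.+1.
  move=> t s us cs s3.
  have [g' [icg sz cq]] := lift_cycle hc Hd trees (@adjt_link _ _ r M c B pr hc He t) us cs s3.
  have tc : #|t| <= r.*2.+1.
    case: s us cs s3 {sz} => // w0 rest _; rewrite /= rcons_path => /andP [_].
    by case/andP => _ /orP [/eqP <-|/eqP <-] _; apply: typ_card.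
  have h1 := hg g' icg; have h2 := ncolours_le hc cq.
  case: (leqP L (size g')) => hLg.
    have := f_nondecr _ _ hLg; lia.
  lia.
have EGt := fun t => EG (adjt_sym r c B pr t) (adjt_irr r c B pr t) (ltn0Sn L) (Hcyc t) setT.
rewrite /nedges.
apply: (leq_trans (leq_div _ _)).
apply: (leq_trans (@card_cover_le _ _ _ (fun t => Epairs (adjt r c B pr t) setT)
   (fun q => typ r M c B pr q.1 q.2) _)).
  move=> q; rewrite !inE => aq; rewrite /adjt aq eqxx //.
apply: (@leq_trans (\sum_(t : {set 'I_M.+1}) (2 * L.+1 * #|[set: H]|))).
  by apply: leq_sum => t _; apply: EGt.
by rewrite sum_nat_const cardsT mulnA.
Qed.
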